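(* Let $t \ge 0$ and consider the three-taxon multispecies coalescent described in the context, with species tree $S$ of topology $AB|C$ and internal branch length $t$. Let $G_1,\dots,G_L$ be the gene trees (topologies and exact coalescence times) of $L$ independent loci. Let $\mathbb{P}_L$ denote the probability that the GLASS/Maximum-Tree method (equivalently, maximum likelihood under the multispecies coalescent) applied to $G_1,\dots,G_L$ fails to output the topology $AB|C$. Then the limit $\alpha_{\mathrm{ML}}(t) = -\lim_{L\to\infty}\frac{1}{L}\ln \mathbb{P}_L$ exists and $$\alpha_{\mathrm{ML}}(t) = t.$$
   Context: Multispecies coalescent, three-taxon case: $S$ is an ultrametric rooted species tree on three species $A,B,C$ with topology $AB|C$, all (haploid) populations of equal size $N$, time measured in units of $N$ generations backwards from the present. Populations are $A,B,C$ (extant), $AB$ (ancestor of $A$ and $B$, from divergence time $\tau_{AB}$ to $\tau_{ABC}$) and $ABC$ (root population, from $\tau_{ABC}$ to $\infty$), with $\tau_{AB}\le\tau_{ABC}$; the internal branch length is $t=\tau_{ABC}-\tau_{AB}$. For each locus one lineage is sampled from each of $A,B,C$ at time $0$; going backwards in time, within each population every pair of lineages present in that population coalesces independently at rate $1$, and lineages entering an ancestral population merge into it. Loci are independent (unlinked). In particular the lineages from $A$ and $B$ fail to coalesce in population $AB$ with probability $e^{-t}$, in which case the three gene-tree topologies are equally likely. Gene trees are assumed known exactly, including coalescence times. GLASS/Maximum Tree: for each pair of species $X,Y$, compute the minimum over loci of the coalescence time of the lineages from $X$ and $Y$ in $G_\ell$; the output topology groups together the pair with the smallest such minimum. Under this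 model this method coincides with maximum likelihood estimation of the species tree from the gene trees. *)

(* Defs.v *)
From HB Require Import structures.
From mathcomp Require Import all_boot all_order all_algebra.
From mathcomp Require Import all_classical all_reals all_analysis.
Set Implicit Arguments. Unset Strict Implicit. Unset Printing Implicit Defensive.
Import Order.TTheory GRing.Theory Num.Theory.
Import numFieldNormedType.Exports.
Local Open Scope classical_set_scope.
Local Open Scope ring_scope.

Definition mutually_independent d (T : measurableType d) (R : realType)
  (P : probability T R) (I : eqType) (X : I -> T -> R) : Prop :=
  forall (s : seq I) (B : I -> set R), uniq s ->
    (forall i, measurable (B i)) ->
    P (\bigcap_(i in [set` s]) (X i @^-1` B i)) =
    (\prod_(i <- s) P (X i @^-1` B i))%E.

Inductive pair3 := pAB | pAC | pBC.

(** Exponential(1) "pair clocks" used at one locus.  Each pair of lineages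
    present in a population coalesces at rate 1 independently:
    - clk_AB1 : clock of the pair (A,B) in population AB;
    - clk_2   : clock of the pair ((AB),C) in population ABC, when A and B
                already coalesced in AB;
    - clk_AB3, clk_AC3, clk_BC3 : clocks of the three pairs in population ABC
                when A and B did not coalesce in AB;
    - clk_last : clock of the two remaining lineages in ABC after the first
                coalescence in the three-lineage case. *)
Definition clk_AB1 : 'I_6 := inord 0.
Definition clk_2 : 'I_6 := inord 1.
Definition clk_AB3 : 'I_6 := inord 2.
Definition clk_AC3 : 'I_6 := inord 3.
Definition clk_BC3 : 'I_6 := inord 4.
Definition clk_last : 'I_6 := inord 5.

(** Coalescence time (measured from the present) of the lineages of a pair
    in the gene tree of a locus with clocks [c], for the species tree
    AB|C with divergence times tAB and tABC = tAB + t. *)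
Definition coal_time (R : realType) (tAB t : R) (c : 'I_6 -> R) (p : pair3) : R :=
  let tABC := tAB + t in
  if c clk_AB1 < t then
    (* A and B coalesce in population AB: gene tree topology AB|C *)
    match p with
    | pAB => tAB + c clk_AB1
    | _ => tABC + c clk_2
    end
  else
    (* three lineages enter ABC; first coalescence is the pair with the
       smallest clock, the root follows after a further clock *)
    let cp := match p with pAB => c clk_AB3 | pAC => c clk_AC3 | pBC => c clk_BC3 end in
    let m := Num.min (c clk_AB3) (Num.min (c clk_AC3) (c clk_BC3)) in
    if cp == m then tABC + m else tABC + m + c clk_last.

(** Minimum over the loci 0..L-1 of the coalescence time of pair p
    (for L = 0 this is an irrelevant default value). *)
Definition min_coal (R : realType) (tAB t : R) (G : nat -> 'I_6 -> R)
  (L : nat) (p : pair3) : R :=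
  \big[Num.min/coal_time tAB t (G 0%N) p]_(l < L) coal_time tAB t (G l) p.

(** GLASS / Maximum Tree outputs AB|C iff the pair (A,B) has the strictly
    smallest minimal coalescence time. *)
Definition glass_outputs_AB (R : realType) (tAB t : R) (G : nat -> 'I_6 -> R)
  (L : nat) : Prop :=
  min_coal tAB t G L pAB < min_coal tAB t G L pAC /\
  min_coal tAB t G L pAB < min_coal tAB t G L pBC.

Definition glass_fail_prob d (T : measurableType d) (R : realType)
  (P : probability T R) (tAB t : R) (X : nat -> 'I_6 -> T -> R) (L : nat) : R :=
  fine (P [set w | ~ glass_outputs_AB tAB t (fun l k => X l k w) L]).

(* Main.v *)
Require Import Defs.
From HB Require Import structures.
From mathcomp Require Import all_boot all_order all_algebra.
From mathcomp Require Import all_classical all_reals all_analysis.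
From mathcomp Require Import measurable_realfun.
From mathcomp Require Import lra.
Import Order.TTheory GRing.Theory Num.Theory.
Import numFieldNormedType.Exports.
Local Open Scope classical_set_scope.
Local Open Scope ring_scope.
Section Expo.
Variables (R : realType) (d : measure_display) (T : measurableType d)
  (P : probability T R) (Y : {RV P >-> R}).
Hypothesis HY : distribution P Y = exponential_prob 1 :> (set R -> \bar R).

Local Notation mu := (distribution P Y).

Let mu_neg : mu `]-oo, 0[ = 0%E.
Proof.
rewrite HY /exponential_prob; apply: integral0_eq => x.
by rewrite /= in_itv /= => x0; rewrite lt0_exponential_pdf.
Qed.

Let mu_pt a : mu [set a] = 0%E.
Proof. by rewrite HY /exponential_prob integral_set1. Qed.

Let mu_c a : 0 < a -> mu `[0, a] = (1 - (expR (- a))%:E)%E.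
Proof. by move=> a0; rewrite HY exponential_prob_itv0c // mulN1r. Qed.

Lemma expo_co a : 0 < a -> P (Y @^-1` `[0, a[) = (1 - expR (- a))%:E.
Proof.
move=> a0.
have -> : P (Y @^-1` `[0, a[) = mu `[0, a[ by [].
have E : `[0, a]%classic = `[0, a[%classic `|` [set a].
  apply/seteqP; split => x /=; rewrite !in_itv /=.
    by move=> /andP[x0]; rewrite le_eqVlt => /orP[/eqP ->|->]; [right|left; rewrite x0].
  by case=> [/andP[-> /ltW]|->] //; rewrite (ltW a0) lexx.
have := mu_c a a0; rewrite E; rewrite [X in X = _ -> _]measureU //=; last first.
  by apply/seteqP; split => x //= [] ; rewrite in_itv /= => /andP[_ xa] xe; move: xa; rewrite xe ltxx.
move=> H; move: H; set z := (X in (_ + X)%E); have -> : z = 0%E by exact: mu_pt.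
by rewrite adde0 EFinB => ->.
Qed.

Lemma expo_ge a : 0 <= a -> P (Y @^-1` `[a, +oo[) = (expR (- a))%:E.
Proof.
move=> a0.
have -> : P (Y @^-1` `[a, +oo[) = mu `[a, +oo[ by [].
have -> : `[a, +oo[%classic = ~` (`]-oo, 0[%classic `|` `[0, a[%classic).
  apply/seteqP; split => x /=; rewrite ?in_itv /= ?andbT.
    move=> ax [x0|/andP[_ xa]]; last by move: (le_lt_trans ax xa); rewrite ltxx.
    by move: (le_lt_trans (le_trans a0 ax) x0); rewrite ltxx.
  move=> H; rewrite leNgt; apply/negP => xa; apply: H.
  have [x0|x0] := ltP x 0; first by left.
  by right; rewrite xa.
rewrite probability_setC; last by apply: measurableU.
rewrite measureU //=; last first.
  by apply/seteqP; split => x //= []; rewrite !in_itv /= => x0 /andP[/(lt_le_trans x0)]; rewrite ltxx.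
rewrite mu_neg add0e.
have [->|ap] := eqVneq a 0.
  by rewrite set_itvco0 measure0 sube0 oppr0 expR0.
have a0' : 0 < a by rewrite lt_neqAle eq_sym ap a0.
have -> : mu `[0, a[ = P (Y @^-1` `[0, a[) by [].
by rewrite expo_co // -EFinB opprB addrC subrK.
Qed.
End Expo.
Arguments expo_ge {R d T P Y} HY {a}.
Arguments expo_co {R d T P Y} HY {a}.
Section Main.
Variables (R : realType) (d : measure_display) (T : measurableType d)
  (P : probability T R) (X : nat -> 'I_6 -> {RV P >-> R}).

Definition locs (L : nat) : seq (nat * 'I_6) :=
  [seq (l, k) | l <- iota 0 L, k <- enum 'I_6].

Lemma rect_eq (L : nat) (B : nat -> 'I_6 -> set R) :
  [set w | forall l k, (l < L)%N -> B l k (X l k w)] =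
  \bigcap_(i in [set` locs L]) ((X i.1 i.2 : T -> R) @^-1` B i.1 i.2).
Proof.
apply/seteqP; split => w /=.
  move=> H [l k] /=; rewrite /= => /allpairsP[[l' k'] /= [+ _ [-> ->]]].
  by rewrite mem_iota add0n => /andP[_ /H].
move=> H l k lL; apply: (H (l, k)) => /=.
by apply/allpairsP; exists (l, k); rewrite /= mem_iota lL mem_enum.
Qed.

Lemma rect_meas (L : nat) (B : nat -> 'I_6 -> set R) :
  (forall l k, measurable (B l k)) ->
  measurable [set w | forall l k, (l < L)%N -> B l k (X l k w)].
Proof.
move=> mB; rewrite rect_eq; apply: fin_bigcap_measurable; first exact: finite_seq.
move=> [l k] _ /=; rewrite -[X in measurable X]setTI.
exact: (measurable_funPT (X l k)).
Qed.

Hypothesis Hind : mutually_independent P (fun i : nat * 'I_6 => (X i.1 i.2 : T -> R)).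

Lemma rect (L : nat) (B : nat -> 'I_6 -> set R) :
  (forall l k, measurable (B l k)) ->
  P [set w | forall l k, (l < L)%N -> B l k (X l k w)] =
  (\prod_(l <- iota 0 L) \prod_(k <- enum 'I_6) P (X l k @^-1` B l k))%E.
Proof.
move=> mB.
have u : uniq (locs L).
  apply: allpairs_uniq; [exact: iota_uniq| exact: enum_uniq|].
  by move=> [a b] [c e] _ _ /=.
have := @Hind (locs L) (fun i => B i.1 i.2) u (fun i => mB i.1 i.2).
by rewrite /locs big_allpairs /= rect_eq.
Qed.
End Main.
Arguments rect {R d T P X} Hind L B.
Arguments rect_meas {R d T P X} L B.
Section Core.
Variables (R : realType) (tAB t : R).

Lemma min_coal_le (c : nat -> 'I_6 -> R) L p l : (l < L)%N ->
  min_coal tAB t c L p <= coal_time tAB t (c l) p.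
Proof.
move=> lL; rewrite /min_coal.
exact: (bigmin_le _ (Ordinal lL) (fun i : 'I_L => coal_time tAB t (c (nat_of_ord i)) p)).
Qed.

Lemma min_coal_ge (c : nat -> 'I_6 -> R) L p b :
  (forall l, (l < L)%N -> b <= coal_time tAB t (c l) p) ->
  b <= coal_time tAB t (c 0%N) p -> b <= min_coal tAB t c L p.
Proof.
rewrite /min_coal => H H0; apply: le_bigmin => // i _; exact: H.
Qed.

Lemma ct_ge (c : 'I_6 -> R) p : 0 <= t -> (forall k, 0 <= c k) -> p <> pAB ->
  tAB + t <= coal_time tAB t c p.
Proof.
move=> t0 c0 pn; rewrite /coal_time.
have m0 : 0 <= Num.min (c clk_AB3) (Num.min (c clk_AC3) (c clk_BC3)).
  by rewrite !le_min !c0.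
case: ifP => _.
  by case: p pn => // _; rewrite lerDl c0.
case: ifP => _; first by rewrite lerDl.
by rewrite -addrA lerDl addr_ge0.
Qed.

Lemma up_core (c : nat -> 'I_6 -> R) L : 0 <= t -> (0 < L)%N ->
  (forall l k, (l < L)%N -> 0 <= c l k) ->
  ~ glass_outputs_AB tAB t c L -> forall l, (l < L)%N -> t <= c l clk_AB1.
Proof.
move=> t0 L0 c0 ng l lL; rewrite leNgt; apply/negP => cl; apply: ng.
have h1 : min_coal tAB t c L pAB < tAB + t.
  apply: (le_lt_trans (min_coal_le c L pAB l lL)).
  by rewrite /coal_time cl ltrD2l.
have h2 p : p <> pAB -> tAB + t <= min_coal tAB t c L p.
  move=> pn; apply: min_coal_ge; last by apply: ct_ge => // k; apply: c0.
  by move=> l' l'L; apply: ct_ge => // k; apply: c0.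
by split; apply: (lt_le_trans h1); apply: h2.
Qed.

Lemma low_core (c : nat -> 'I_6 -> R) L e : 0 < e -> (0 < L)%N ->
  (forall l, (l < L)%N ->
     [/\ t <= c l clk_AB1, e <= c l clk_AB3, 0 <= c l clk_AC3,
         0 <= c l clk_BC3 & e <= c l clk_last]) ->
  c 0%N clk_AC3 < e -> e <= c 0%N clk_BC3 ->
  ~ glass_outputs_AB tAB t c L.
Proof.
move=> e0 L0 H a0 b0 [g _].
have [t1 e1 _ _ _] := H 0%N L0.
have hAC : coal_time tAB t (c 0%N) pAC = tAB + t + c 0%N clk_AC3.
  rewrite /coal_time ltNge t1 /=.
  have -> : Num.min (c 0%N clk_AB3) (Num.min (c 0%N clk_AC3) (c 0%N clk_BC3))
            = c 0%N clk_AC3.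
    rewrite (@min_r _ _ (c 0%N clk_AB3)); last first.
      by rewrite ge_min (ltW (lt_le_trans a0 e1)).
    by rewrite min_l // (ltW (lt_le_trans a0 b0)).
  by rewrite eqxx.
have hAB : tAB + t + e <= min_coal tAB t c L pAB.
  have G l : (l < L)%N -> tAB + t + e <= coal_time tAB t (c l) pAB.
    move=> lL; have [tl el al bl ll] := H l lL.
    rewrite /coal_time ltNge tl /=.
    have m0 : 0 <= Num.min (c l clk_AB3) (Num.min (c l clk_AC3) (c l clk_BC3)).
      by rewrite !le_min al bl (le_trans (ltW e0) el).
    case: ifP => [/eqP <-|_]; first by apply: lerD.
    rewrite -[X in _ <= X]addrA; apply: lerD => //; rewrite -[X in X <= _]add0r; exact: lerD.
  by apply: min_coal_ge => //; apply: G.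
have := lt_le_trans g (min_coal_le c L pAC 0 L0).
rewrite hAC => h; have := le_lt_trans hAB h.
rewrite ltrD2l => /(lt_trans a0); by rewrite ltxx.
Qed.
End Core.
Section Meas.
Variables (R : realType) (d : measure_display) (T : measurableType d)
  (P : probability T R) (tAB t : R) (X : nat -> 'I_6 -> {RV P >-> R}).

Lemma meas_bigmin (I : Type) (r : seq I) (Q : pred I) (x0 : T -> R) (F : I -> T -> R) :
  measurable_fun setT x0 -> (forall i, measurable_fun setT (F i)) ->
  measurable_fun setT (fun w => \big[Num.min/x0 w]_(i <- r | Q i) F i w).
Proof.
move=> m0 mF; elim: r => [|i r IH].
  by under eq_fun do rewrite big_nil.
under eq_fun do rewrite big_cons.
case: (Q i) => //.
exact: (measurable_minr (mF i) IH).
Qed.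

Lemma meas_ct l p : measurable_fun setT (fun w => coal_time tAB t (fun k => X l k w) p).
Proof.
rewrite /coal_time; apply: measurable_fun_ifT.
- by apply: measurable_fun_ltr.
- by case: p => /=; apply: measurable_funD.
- have mm : measurable_fun setT (fun w => Num.min (X l clk_AB3 w)
      (Num.min (X l clk_AC3 w) (X l clk_BC3 w))).
    by apply: (measurable_minr _ (measurable_minr _ _)).
  apply: measurable_fun_ifT.
  + by apply: measurable_fun_eqr => //; case: p.
  + exact: measurable_funD.
  + by apply: measurable_funD => //; apply: measurable_funD.
Qed.

Lemma meas_mc L p : measurable_fun setT (fun w => min_coal tAB t (fun l k => X l k w) L p).
Proof. by rewrite /min_coal; apply: meas_bigmin => // i; apply: meas_ct. Qed.

Lemma meas_fail L : measurable [set w | ~ glass_outputs_AB tAB t (fun l k => X l k w) L].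
Proof.
have mlt p q : measurable [set w | min_coal tAB t (fun l k => X l k w) L p <
                                   min_coal tAB t (fun l k => X l k w) L q].
  move: (measurable_fun_ltr (meas_mc L p) (meas_mc L q) measurableT) => /(_ [set true]) H.
  by rewrite -[X in measurable X]setTI; exact: H.
rewrite (_ : [set w | _] = ~` ([set w | min_coal tAB t (fun l k => X l k w) L pAB <
                                   min_coal tAB t (fun l k => X l k w) L pAC] `&`
                                [set w | min_coal tAB t (fun l k => X l k w) L pAB <
                                   min_coal tAB t (fun l k => X l k w) L pBC])).
  by apply: measurableC; apply: measurableI.
by apply/seteqP; split => w /=.
Qed.
End Meas.
Section Lim.
Variable R : realType.

Lemma final_lim (t : R) (f : nat -> R) :
  (forall L, (0 < L)%N -> t <= f L) ->
  (forall e, 0 < e -> exists K, forall L, (0 < L)%N -> f L <= t + e + K / L%:R) ->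
  f @ \oo --> t.
Proof.
move=> Hlo Hup; apply/cvgrPdist_le => eps eps0.
have e2 : 0 < eps / 2 by rewrite divr_gt0.
have [K HK] := Hup _ e2.
have K0 : 0 <= `|K| / (eps / 2) by rewrite divr_ge0 // ltW.
set N := Num.Def.archi_bound (`|K| / (eps / 2)).
have HN := archi_boundP K0.
exists N.+1 => // L /= NL.
have L0 : (0 < L)%N by apply: leq_trans NL.
have Lr : 0 < L%:R :> R by rewrite ltr0n.
rewrite ler_distlC; apply/andP; split.
  by rewrite (le_trans _ (Hlo _ L0)) // lerBlDr lerDl ltW.
apply: (le_trans (HK _ L0)); rewrite -addrA lerD2l.
have : K / L%:R <= eps / 2.
  rewrite ler_pdivrMr //; apply: (le_trans (ler_norm K)).
  rewrite -ler_pdivrMl //.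
  rewrite mulrC; apply: (le_trans (ltW HN)); rewrite ler_nat; exact: ltnW.
by move=> h; rewrite [X in _ <= X](splitr eps) lerD2l.
Qed.
End Lim.
Definition Bup {R : realType} (t : R) (i : nat) : set R :=
  if i == 0%N then `[t, +oo[%classic else `[0, +oo[%classic.
Definition gup {R : realType} (t : R) (i : nat) : R :=
  if i == 0%N then expR (- t) else 1.
Definition Blo {R : realType} (t e : R) (l i : nat) : set R :=
  match i with
  | 0 => `[t, +oo[%classic
  | 2 => `[e, +oo[%classic
  | 3 => if l == 0%N then `[0, e[%classic else `[0, +oo[%classic
  | 4 => if l == 0%N then `[e, +oo[%classic else `[0, +oo[%classic
  | 5 => `[e, +oo[%classic
  | _ => `[0, +oo[%classic
  end.
Definition glo {R : realType} (t e : R) (l i : nat) : R :=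
  match i with
  | 0 => expR (- t)
  | 2 => expR (- e)
  | 3 => if l == 0%N then 1 - expR (- e) else 1
  | 4 => if l == 0%N then expR (- e) else 1
  | 5 => expR (- e)
  | _ => 1
  end.

Lemma prod6 (R : realType) (g : nat -> R) :
  \prod_(k <- enum 'I_6) g (nat_of_ord k) = g 0%N * g 1%N * g 2%N * g 3%N * g 4%N * g 5%N.
Proof. by rewrite big_enum /= !big_ord_recl big_ord0 /= mulr1 !mulrA. Qed.

Lemma val_clk : [/\ nat_of_ord clk_AB1 = 0%N, nat_of_ord clk_2 = 1%N,
  nat_of_ord clk_AB3 = 2%N, nat_of_ord clk_AC3 = 3%N & 
  (nat_of_ord clk_BC3 = 4%N /\ nat_of_ord clk_last = 5%N)].
Proof. by rewrite /clk_AB1 /clk_2 /clk_AB3 /clk_AC3 /clk_BC3 /clk_last !inordK. Qed.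
Definition Gl {R : realType} (t e : R) (l : nat) : R :=
  glo t e l 0 * glo t e l 1 * glo t e l 2 * glo t e l 3 * glo t e l 4 * glo t e l 5.
Section Prob.
Variables (R : realType) (d : measure_display) (T : measurableType d)
  (P : probability T R) (tAB t : R) (X : nat -> 'I_6 -> {RV P >-> R}).
Hypothesis Hind : mutually_independent P (fun i : nat * 'I_6 => (X i.1 i.2 : T -> R)).
Hypothesis Hdist : forall (l : nat) (k : 'I_6),
  distribution P (X l k) = exponential_prob 1 :> (set R -> \bar R).
Hypothesis t0 : 0 <= t.

Lemma P_Bup l (k : 'I_6) : P (X l k @^-1` Bup t k) = (gup t k)%:E.
Proof.
rewrite /Bup /gup; case: ifP => _; first by rewrite (expo_ge (Hdist l k) t0).
by rewrite (expo_ge (Hdist l k)) // oppr0 expR0.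
Qed.

Lemma P_Blo e l (k : 'I_6) : 0 < e -> P (X l k @^-1` Blo t e l k) = (glo t e l k)%:E.
Proof.
move=> e0; have H := Hdist l k.
have E0 : P (X l k @^-1` `[0, +oo[%classic) = 1%E by rewrite (expo_ge H) // oppr0 expR0.
case: k H E0 => [[|[|[|[|[|[|i]]]]]] ki] //= H E0; rewrite /Blo /glo;
  try (by rewrite E0); try (by rewrite (expo_ge H t0));
  try (by rewrite (expo_ge H (ltW e0)));
  try (by case: ifP => _ //; rewrite (expo_co H e0));
  try (by case: ifP => _ //; rewrite (expo_ge H (ltW e0))).
Qed.

Lemma meas_Bup (l : nat) (k : 'I_6) : measurable (Bup t k).
Proof. by rewrite /Bup; case: ifP => _; exact: measurable_itv. Qed.

Lemma meas_Blo e (l : nat) (k : 'I_6) : measurable (Blo t e l k).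
Proof.
rewrite /Blo; case: (nat_of_ord k) => [|[|[|[|[|[|i]]]]]]; try exact: measurable_itv;
  by case: ifP => _; exact: measurable_itv.
Qed.

Local Notation Fail L := [set w | ~ glass_outputs_AB tAB t (fun l k => X l k w) L].

Lemma up_bound L : (0 < L)%N -> (P (Fail L) <= (expR (- t) ^+ L)%:E)%E.
Proof.
move=> L0.
set A := [set w : T | forall l (k : 'I_6), (l < L)%N -> Bup t k (X l k w)].
set N := [set w : T | forall l (k : 'I_6), (l < L)%N -> `[0, +oo[%classic (X l k w)].
have mA : measurable A by apply: (rect_meas (X:=X) L (fun l k => Bup t k)) => l k; exact: meas_Bup.
have mN : measurable N by apply: (rect_meas (X:=X) L (fun _ _ => `[0, +oo[%classic)) => l k; exact: measurable_itv.
have PN : P N = 1%E.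
  rewrite (rect Hind L (fun _ _ => `[0, +oo[%classic)); last by move=> *; exact: measurable_itv.
  rewrite big1 // => l _; rewrite big1 // => k _.
  by rewrite (expo_ge (Hdist l k) (lexx 0)) oppr0 expR0.
have PA : P A = (expR (- t) ^+ L)%:E.
  rewrite (rect Hind L (fun l k => Bup t k)); last by move=> l k; exact: meas_Bup.
  rewrite (eq_bigr (fun=> (expR (- t))%:E)); last first.
    move=> l _; rewrite (eq_bigr (fun k : 'I_6 => (gup t k)%:E)); last first.
      by move=> k _; exact: P_Bup.
    by rewrite prodEFin prod6 /gup /= !mulr1.
  rewrite prodEFin (_ : iota 0 L = index_iota 0 L); last by rewrite /index_iota subn0.
  by rewrite prodr_const_nat subn0.
have sub : Fail L `<=` A `|` ~` N.
  move=> w Fw; have [Nw|nNw] := pselect (N w); last by right.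
  left => l k lL.
  have c0 : forall l' (k' : 'I_6), (l' < L)%N -> 0 <= X l' k' w.
    by move=> l' k' l'L; have := Nw l' k' l'L; rewrite /= in_itv /= andbT.
  have H := @up_core R tAB t (fun l k => X l k w) L t0 L0 c0 Fw l lL.
  rewrite /Bup /=; case: ifP => [/eqP k0|_].
    have -> : k = clk_AB1 by apply/val_inj; rewrite /= k0 /clk_AB1 inordK.
    by rewrite /= in_itv /= andbT.
  by rewrite /= in_itv /= andbT c0.
apply: (le_trans (le_measure _ _ _ sub)); rewrite ?inE //.
- exact: meas_fail.
- by apply: measurableU => //; apply: measurableC.
have PC : P (~` N) = 0%E by rewrite (probability_setC P mN) PN subee.
have H2 : (P (A `|` ~` N) <= P A + P (~` N))%E := measureU2 P mA (measurableC mN).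
by apply: (le_trans H2); rewrite PC adde0 PA.
Qed.

Lemma lo_bound e L : 0 < e -> (0 < L)%N ->
  ((Gl t e 0 * Gl t e 1 ^+ L.-1)%:E <= P (Fail L))%E.
Proof.
move=> e0 L0.
set E := [set w : T | forall l (k : 'I_6), (l < L)%N -> Blo t e l k (X l k w)].
have mE : measurable E by apply: (rect_meas (X:=X) L (fun l k => Blo t e l k)) => l k; exact: meas_Blo.
have PE : P E = (Gl t e 0 * Gl t e 1 ^+ L.-1)%:E.
  rewrite (rect Hind L (fun l k => Blo t e l k)); last by move=> l k; exact: meas_Blo.
  rewrite (eq_bigr (fun l => (Gl t e l)%:E)); last first.
    move=> l _; rewrite (eq_bigr (fun k : 'I_6 => (glo t e l k)%:E)); last first.
      by move=> k _; exact: P_Blo.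
    by rewrite prodEFin prod6.
  rewrite prodEFin; congr (_%:E).
  case: L L0 {E mE} => // L' _ /=; rewrite big_cons; congr (_ * _).
  rewrite (eq_big_seq (fun=> Gl t e 1)); last first.
    move=> l; rewrite mem_iota => /andP[l1 _].
    by rewrite /Gl /glo; have -> : (l == 0%N) = false by case: l l1.
  rewrite (_ : iota 1 L' = index_iota 1 L'.+1); last by rewrite /index_iota subSS subn0.
  by rewrite prodr_const_nat subSS subn0.
have sub : E `<=` Fail L.
  move=> w Ew; have [v0 v1 v2 v3 [v4 v5]] := val_clk.
  apply: (@low_core R tAB t (fun l k => X l k w) L e e0 L0).
  - move=> l lL; have h k := Ew l k lL.
    move: (h clk_AB1) (h clk_AB3) (h clk_AC3) (h clk_BC3) (h clk_last).
    rewrite /Blo v0 v2 v3 v4 v5 /=.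
    case: (l == 0%N); rewrite /= !in_itv /= ?andbT.
      by move=> -> -> /andP[-> _] /(le_trans (ltW e0)) -> ->.
    by move=> -> -> -> -> ->.
  - by move: (Ew 0%N clk_AC3 L0); rewrite /Blo v3 /= in_itv /= => /andP[].
  - by move: (Ew 0%N clk_BC3 L0); rewrite /Blo v4 /= in_itv /= andbT.
rewrite -PE; apply: le_measure; rewrite ?inE //; exact: meas_fail.
Qed.
End Prob.
Arguments lo_bound {R d T P tAB t X} Hind Hdist t0 {e L}.
Arguments up_bound {R d T P tAB t X} Hind Hdist t0 {L}.

Lemma fine_between (R : realType) (x : \bar R) (a b : R) :
  (a%:E <= x)%E -> (x <= b%:E)%E -> a <= fine x <= b.
Proof. by case: x => [r| |] //=; rewrite !lee_fin => -> ->. Qed.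
Theorem mainTheorem1 (R : realType) (d : measure_display) (T : measurableType d)
  (P : probability T R) (tAB t : R) (X : nat -> 'I_6 -> {RV P >-> R}) :
  0 <= tAB -> 0 <= t ->
  mutually_independent P (fun i : nat * 'I_6 => (X i.1 i.2 : T -> R)) ->
  (forall (l : nat) (k : 'I_6),
     distribution P (X l k) = exponential_prob 1 :> (set R -> \bar R)) ->
  (fun L : nat => - ln (glass_fail_prob P tAB t (fun l k => X l k : T -> R) L)
                  / L%:R) @ \oo --> t.
Proof.
move=> tAB0 t0 Hind Hdist.
set p := fun L => glass_fail_prob P tAB t (fun l k => X l k : T -> R) L.
have Hp L e : (0 < L)%N -> 0 < e ->
    Gl t e 0 * Gl t e 1 ^+ L.-1 <= p L <= expR (- t) ^+ L.
  move=> L0 e0; apply: fine_between.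
    exact: (lo_bound Hind Hdist t0 e0 L0).
  exact: (up_bound Hind Hdist t0 L0).
have G0pos e : 0 < e -> 0 < Gl t e 0.
  move=> e0; rewrite /Gl /glo /=.
  have h : 0 < 1 - expR (- e) by rewrite subr_gt0 expR_lt1 oppr_lt0.
  by rewrite !mulr_gt0 ?expR_gt0.
have G1E e : Gl t e 1 = expR (- (t + 2 * e)).
  rewrite /Gl /glo /= !mulr1 -!expRD; congr expR.
  by rewrite mulr2n mulrDl !mul1r !opprD addrA.
have ppos L (e : R) : (0 < L)%N -> 0 < e -> 0 < p L.
  move=> L0 e0; have /andP[h _] := Hp L e L0 e0.
  apply: lt_le_trans h; rewrite mulr_gt0 ?G0pos // G1E exprn_gt0 // expR_gt0 //.
have H1 : forall L, (0 < L)%N -> t <= - ln (p L) / L%:R.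
  move=> L L0; have pp := ppos L 1 L0 ltr01.
  have /andP[_ pu] := Hp L 1 L0 ltr01.
  rewrite -expRM_natr in pu.
  have h : ln (p L) <= - t * L%:R.
    by rewrite -(expRK (- t * L%:R)) ler_ln ?posrE ?expR_gt0.
  rewrite ler_pdivlMr ?ltr0n //.
  by rewrite mulNr in h; rewrite lerNr.
have H2 : forall e, 0 < e -> exists K, forall L, (0 < L)%N ->
    - ln (p L) / L%:R <= t + e + K / L%:R.
move=> e e0; set e' := e / 2.
have e'0 : 0 < e' by rewrite divr_gt0.
exists (- ln (Gl t e' 0) - (t + 2 * e')) => L L0.
have pp := ppos L e' L0 e'0.
have /andP[pl _] := Hp L e' L0 e'0.
have g0 := G0pos e' e'0.
have h : ln (Gl t e' 0) - L.-1%:R * (t + 2 * e') <= ln (p L).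
  have -> : ln (Gl t e' 0) - L.-1%:R * (t + 2 * e') =
            ln (Gl t e' 0 * Gl t e' 1 ^+ L.-1).
    rewrite lnM ?posrE ?G1E ?exprn_gt0 ?expR_gt0 //.
    by rewrite -expRM_natr expRK mulrC mulNr.
  by rewrite ler_ln ?posrE // mulr_gt0 // G1E exprn_gt0 // expR_gt0.
have Lr : 0 < L%:R :> R by rewrite ltr0n.
rewrite ler_pdivrMr // mulrDl divfK ?gt_eqF //.
have -> : e = 2 * e' by rewrite /e' mulrC divfK // pnatr_eq0.
have : L%:R = L.-1%:R + 1 :> R by rewrite natr1 prednK.
move=> LE; rewrite LE in h *.
move: h; set a := ln (Gl t e' 0); set b := ln (p L); set n := L.-1%:R.
move=> h; rewrite mulrDr mulr1.
have : n * (t + 2 * e') = n * t + n * (2 * e') by rewrite mulrDr.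
move=> E1; rewrite E1 in h.
lra.
exact: (@final_lim R t _ H1 H2).
Qed.
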